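(* A metric space $X$ has asymptotic property $C$ if and only if $\operatorname{trasdim} X<\infty$.
   Context: A family $\mathcal A$ of subsets of a metric space is uniformly bounded if there is $C>0$ with $\operatorname{diam}A\le C$ for all $A\in\mathcal A$; it is $r$-disjoint if $d(A_1,A_2)\ge r$ for all distinct $A_1,A_2\in\mathcal A$. For a set $L$, $\mathrm{Fin}\,L$ is the collection of finite nonempty subsets of $L$. For $M\subset \mathrm{Fin}\,L$ and $\sigma\in\{\emptyset\}\cup\mathrm{Fin}\,L$, $M^\sigma=\{\tau\in\mathrm{Fin}\,L:\sigma\cup\tau\in M,\ \sigma\cap\tau=\emptyset\}$, and $M^a=M^{\{a\}}$. The ordinal $\operatorname{Ord}M$ is defined inductively: $\operatorname{Ord}M=0$ iff $M=\emptyset$; $\operatorname{Ord}M\le\alpha$ iff $\operatorname{Ord}M^a<\alpha$ for every $a\in L$; $\operatorname{Ord}M=\alpha$ iff $\operatorname{Ord}M\le\alpha$ and not $\operatorname{Ord}M<\alpha$; $\operatorname{Ord}M=\infty$ iff $\operatorname{Ord} M\le\alpha$ for no ordinal $\alpha$. For a metric space $(X,d)$, $A(X,d)$ is the set of $\sigma\in\mathrm{Fin}\,\mathbb N$ such that there do NOT exist uniformly bounded families $\mathcal V_i$, $i\in\sigma$, with $\bigcup_{i\in\sigma}\mathcal V_i$ covering $X$ and each $\mathcal V_i$ being $i$-disjoint. Define $\operatorname{trasdim}X=\operatorname{Ord}A(X,d)$, except $\operatorname{trasdim}X=-1$ iff $X$ is bounded. $X$ has asymptotic property $C$ if for every sequence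 of natural numbers $n_1<n_2<\cdots$ there exist $n\in\mathbb N$ and uniformly bounded families $\mathcal U_1,\dots,\mathcal U_n$ such that $\bigcup_{i=1}^n\mathcal U_i$ covers $X$ and each $\mathcal U_i$ is $n_i$-disjoint. *)

(* Defs.v *)
From Stdlib Require Import Reals.
From mathcomp Require Import all_boot.
From mathcomp Require Import finmap.

Set Implicit Arguments.
Unset Strict Implicit.
Unset Printing Implicit Defensive.

Local Open Scope fset_scope.

Definition is_metric (X : Type) (d : X -> X -> R) : Prop :=
  (forall x y, Rle 0 (d x y)) /\
  (forall x y, d x y = R0 <-> x = y) /\
  (forall x y, d x y = d y x) /\
  (forall x y z, Rle (d x z) (Rplus (d x y) (d y z))).

Definition bounded_space (X : Type) (d : X -> X -> R) : Prop :=
  exists C : R, forall x y : X, Rle (d x y) C.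

Definition family (X : Type) := (X -> Prop) -> Prop.

Definition uniformly_bounded (X : Type) (d : X -> X -> R) (F : family X) : Prop :=
  exists C : R, Rlt 0 C /\
    forall A, F A -> forall x y, A x -> A y -> Rle (d x y) C.

(** r-disjoint: d(A1,A2) >= r for distinct members, where
    d(A1,A2) = inf { d x y | x in A1, y in A2 } *)
Definition r_disjoint (X : Type) (d : X -> X -> R) (r : R) (F : family X) : Prop :=
  forall A1 A2, F A1 -> F A2 -> A1 <> A2 ->
    forall x y, A1 x -> A2 y -> Rle r (d x y).

Definition covers (X : Type) (F : family X) : Prop :=
  forall x : X, exists A, F A /\ A x.

(** L = N = {1,2,3,...}; Fin N = finite nonempty subsets of N. *)
Definition inL (a : nat) : bool := (0 < a)%N.

Definition FinN (s : {fset nat}) : Prop :=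
  s != fset0 /\ forall a, a \in s -> inL a.

Definition Mpow (M : {fset nat} -> Prop) (sigma : {fset nat}) : {fset nat} -> Prop :=
  fun tau => FinN tau /\ M (sigma `|` tau) /\ sigma `&` tau = fset0.

Definition Mpt (M : {fset nat} -> Prop) (a : nat) := Mpow M [fset a].

(** [ord_finite M] : Ord M < infinity, i.e. Ord M <= alpha for some ordinal
    alpha.  Since Ord is defined by transfinite recursion
    (Ord M = 0 iff M empty; Ord M <= alpha iff Ord M^a < alpha for all a in L),
    the existence of such an alpha is exactly the inductive (well-founded)
    predicate below. *)
Inductive ord_finite (M : {fset nat} -> Prop) : Prop :=
  | ord_finite_empty : (forall s, ~ M s) -> ord_finite M
  | ord_finite_step : (forall a, inL a -> ord_finite (Mpt M a)) -> ord_finite M.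

Definition Aset (X : Type) (d : X -> X -> R) : {fset nat} -> Prop :=
  fun sigma => FinN sigma /\
    ~ (exists V : nat -> family X,
          (forall i, i \in sigma ->
             uniformly_bounded d (V i) /\ r_disjoint d (INR i) (V i)) /\
          covers (fun A => exists i, i \in sigma /\ V i A)).

(** trasdim X < infinity  (trasdim X = -1 when X is bounded, else Ord A(X,d)) *)
Definition trasdim_finite (X : Type) (d : X -> X -> R) : Prop :=
  bounded_space d \/ ord_finite (Aset d).

(** asymptotic property C; the sequence n_1 < n_2 < ... is s 0 < s 1 < ...,
    and U_1,...,U_n are U 0, ..., U (n-1). *)
Definition asymptotic_property_C (X : Type) (d : X -> X -> R) : Prop :=
  forall s : nat -> nat, (0 < s 0)%N -> (forall i, (s i < s i.+1)%N) ->
    exists (n : nat) (U : nat -> family X),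
      (forall i, (i < n)%N ->
         uniformly_bounded d (U i) /\ r_disjoint d (INR (s i)) (U i)) /\
      covers (fun A => exists i, (i < n)%N /\ U i A).

(* Main.v *)
Require Import Defs.
From Stdlib Require Import Reals.
From Stdlib Require Import Lra Classical ClassicalEpsilon.
From mathcomp Require Import all_boot finmap zify.

Set Implicit Arguments.
Unset Strict Implicit.
Unset Printing Implicit Defensive.
Local Open Scope fset_scope.

Section Dir1.
Variables (X : Type) (d : X -> X -> R).

Definition Hard (P : nat -> Prop) := ~ exists V : nat -> Defs.family X,
  (forall i, P i -> uniformly_bounded d (V i) /\ r_disjoint d (INR i) (V i)) /\
  covers (fun A => exists i, P i /\ V i A).

Lemma Hard_mono (P Q : nat -> Prop) : (forall i, P i -> Q i) -> Hard Q -> Hard P.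
Proof.
move=> PQ HQ [V [HV Hc]]; apply: HQ.
exists (fun i A => P i /\ V i A); split.
- move=> i Qi; destruct (classic (P i)) as [Pi|nPi].
  + have [[C [C0 HC]] Hdj] := HV i Pi; split.
    * exists C; split=> // A [_ HA]; exact: HC.
    * move=> A1 A2 [_ H1] [_ H2]; exact: Hdj.
  + split.
    * exists R1; split; [lra|] => A [Pi _]; contradiction.
    * move=> A1 A2 [Pi _]; contradiction.
- move=> x; have [A [[i [Pi ViA]] Ax]] := Hc x.
  exists A; split=> //; exists i; split; [exact: PQ|]; by split.
Qed.

Lemma not_ord_nonempty M : ~ ord_finite M -> exists s, M s.
Proof.
move=> nf; apply: NNPP => H; apply: nf; apply: ord_finite_empty => s Ms.
by apply: H; exists s.
Qed.

Lemma not_ord_step M : ~ ord_finite M -> exists a, inL a /\ ~ ord_finite (Mpt M a).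
Proof.
move=> nf; apply: NNPP => H; apply: nf; apply: ord_finite_step => a Ha.
apply: NNPP => H'; apply: H; by exists a.
Qed.

Definition pick (M : {fset nat} -> Prop) : nat :=
  epsilon (inhabits 0%N) (fun a => inL a /\ ~ ord_finite (Mpt M a)).

Fixpoint Ms (k : nat) : {fset nat} -> Prop :=
  match k with 0 => Aset d | k.+1 => Mpt (Ms k) (pick (Ms k)) end.

Definition aa k := pick (Ms k).

Hypothesis nf0 : ~ ord_finite (Aset d).

Lemma Ms_nf k : ~ ord_finite (Ms k) /\ inL (aa k).
Proof.
elim: k => [|k [IH _]].
- split=> //; have := epsilon_spec (inhabits 0%N) _ (not_ord_step nf0).
  by case.
- have [H1 H2] := epsilon_spec (inhabits 0%N) _ (not_ord_step IH).
  split; first exact H2.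
  have [H3 H4] := epsilon_spec (inhabits 0%N) _ (not_ord_step H2); exact H3.
Qed.

Definition Inv k := forall tau, Ms k tau ->
  (forall j, (j < k)%N -> aa j \notin tau) /\
  Hard (fun i => i \in tau \/ exists j, (j < k)%N /\ aa j = i).

Lemma Inv_all k : Inv k.
Proof.
elim: k => [|k IH] tau.
- move=> /= [_ H]; split; first by [].
  apply: (Hard_mono (Q := fun i => i \in tau)); last exact: H.
  by move=> i0 [//|[j [Hj _]]].
- move=> [_ [HM Hdis]].
  have [Hn Hh] := IH _ HM.
  have akt : aa k \notin tau.
    apply/negP => Hin.
    have : aa k \in [fset aa k] `&` tau by rewrite in_fsetI in_fset1 eqxx Hin.
    by rewrite /aa Hdis in_fset0.
  split.
  + move=> j Hj; case: (ltngtP j k) => Hjk.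
    * have := Hn j Hjk; rewrite in_fsetU negb_or; by case/andP.
    * lia.
    * by rewrite Hjk.
  + apply: Hard_mono Hh => i [Hi|[j [Hj Ej]]].
    * by left; rewrite in_fsetU Hi orbT.
    * case: (ltngtP j k) => Hjk.
      -- by right; exists j.
      -- lia.
      -- by left; rewrite in_fsetU in_fset1 -Ej Hjk eqxx.
Qed.

Lemma aa_inj i j : aa i = aa j -> i = j.
Proof.
have key : forall j k, (j < k)%N -> aa j <> aa k.
  move=> j0 k Hjk E.
  have [nf _] := Ms_nf k.+1.
  have [tau [_ [HM _]]] := not_ord_nonempty nf.
  have [Hn _] := Inv_all HM.
  have := Hn j0 Hjk; by rewrite in_fsetU in_fset1 E eqxx.
move=> E; case: (ltngtP i j) => H //.
- by case: (key _ _ H E).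
- by case: (key _ _ H (esym E)).
Qed.

Fixpoint ssum k := match k with 0 => aa 0 | k.+1 => (ssum k + aa k.+1)%N end.

Lemma aa_le k : (aa k <= ssum k)%N.
Proof. case: k => [|k] //=; exact: leq_addl. Qed.

Lemma dir1_contra : ~ asymptotic_property_C d.
Proof.
move=> HC.
have pos : forall k, (0 < aa k)%N by move=> k; have [_ H] := Ms_nf k.
have [n [U [HU Hcov]]] : exists (n : nat) (U : nat -> Defs.family X),
      (forall i, (i < n)%N ->
         uniformly_bounded d (U i) /\ r_disjoint d (INR (ssum i)) (U i)) /\
      covers (fun A => exists i, (i < n)%N /\ U i A).
  apply: HC; first exact: pos.
  move=> i /=; have := pos i.+1; lia.
have [nf _] := Ms_nf n.
have [tau Htau] := not_ord_nonempty nf.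
have [_ Hh] := Inv_all Htau.
have Hh2 : Hard (fun i => exists j, (j < n)%N /\ aa j = i).
  apply: Hard_mono Hh => i H; by right.
apply: Hh2.
exists (fun b A => exists i, (i < n)%N /\ aa i = b /\ U i A); split.
- move=> b [j [Hj <-]].
  have [[C [C0 HCb]] Hdj] := HU j Hj; split.
  + exists C; split=> // A [i [Hi [Ea UA]]].
    rewrite (aa_inj Ea) in UA; exact: HCb.
  + move=> A1 A2 [i1 [_ [E1 U1]]] [i2 [_ [E2 U2]]] neq x y H1 H2.
    rewrite (aa_inj E1) in U1; rewrite (aa_inj E2) in U2.
    apply: Rle_trans (Hdj _ _ U1 U2 neq x y H1 H2).
    apply: le_INR; apply/leP; exact: aa_le.
- move=> x; have [A [[i [Hi UA]] Ax]] := Hcov x.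
  exists A; split=> //; exists (aa i); split; [by exists i| by exists i].
Qed.

End Dir1.

Fixpoint Sf (s : nat -> nat) (n : nat) : {fset nat} :=
  match n with 0 => fset0 | n.+1 => s 0%N |` Sf (fun i => s i.+1) n end.

Lemma in_Sf n : forall s x, x \in Sf s n <-> exists j, (j < n)%N /\ s j = x.
Proof.
elim: n => [|n IH] s x /=.
- rewrite in_fset0; split=> // [[j [Hj _]]] //.
- rewrite in_fset1U; split.
  + case/orP => [/eqP ->|/IH [j [Hj <-]]]; first by exists 0%N.
    by exists j.+1.
  + move=> [[|j] [Hj <-]]; first by rewrite eqxx.
    apply/orP; right; apply/IH; by exists j.
Qed.

Lemma mono_s s : (forall i, (s i < s i.+1)%N) -> forall i, (s 0 + i <= s i)%N.
Proof.
move=> Hs; elim=> [|i IH]; first by rewrite addn0.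
have := Hs i; lia.
Qed.

Lemma FinN_Sf s n : (forall i, (s i < s i.+1)%N) -> (0 < s 0)%N -> (0 < n)%N ->
  FinN (Sf s n).
Proof.
move=> Hs H0 Hn; split.
- apply/negP => /eqP E.
  have : s 0%N \in Sf s n by apply/in_Sf; exists 0%N.
  by rewrite E in_fset0.
- move=> a /in_Sf [j [_ <-]]; rewrite /inL; have := mono_s Hs j; lia.
Qed.

Lemma Q M : ord_finite M -> forall s, (forall i, (s i < s i.+1)%N) -> (0 < s 0)%N ->
  exists n, (0 < n)%N /\ ~ M (Sf s n).
Proof.
elim=> {M} [M Hempty|M _ IH] s Hs H0.
- by exists 1%N; split=> //; apply: Hempty.
- have [n [Hn nM]] := IH (s 0%N) H0 (fun i => s i.+1) (fun i => Hs i.+1)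
    (leq_ltn_trans (leq0n _) (Hs 0%N)).
  exists n.+1; split=> // HM; apply: nM; split.
  + apply: FinN_Sf; try done; try (by move=> i; apply: Hs); exact: (leq_ltn_trans (leq0n _) (Hs 0%N)).
  + split; first exact: HM.
    apply/fsetP => x; rewrite in_fsetI in_fset1 in_fset0.
    apply/negP => /andP [/eqP -> /in_Sf [j [_ E]]].
    have := mono_s Hs j.+1; rewrite E; lia.
Qed.

Theorem proposition1 (X : Type) (d : X -> X -> R) (Hd : is_metric d) :
  asymptotic_property_C d <-> trasdim_finite d.
Proof.
split.
- move=> HC; right; apply: NNPP => nf; exact: (dir1_contra nf HC).
- case.
  + move=> [C HC] s _ _.
    exists 1%N, (fun _ A => A = (fun _ => True)); split.
    * move=> i _; split.
      -- exists (Rmax R1 C); split.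
         ++ apply: Rlt_le_trans (Rmax_l R1 C); lra.
         ++ move=> A _ x y _ _; exact: Rle_trans (HC x y) (Rmax_r R1 C).
      -- move=> A1 A2 -> -> neq; by case: neq.
    * move=> x; exists (fun _ => True); split=> //; by exists 0%N.
  + move=> Hof s H0 Hs.
    have [n [Hn nA]] := Q Hof Hs H0.
    have [V [HV Hc]] : exists V : nat -> Defs.family X,
          (forall i, i \in Sf s n ->
             uniformly_bounded d (V i) /\ r_disjoint d (INR i) (V i)) /\
          covers (fun A => exists i, i \in Sf s n /\ V i A).
      apply: NNPP => H; apply: nA; split=> //; exact: FinN_Sf.
    exists n, (fun i => V (s i)); split.
    * move=> i Hi; apply: HV; apply/in_Sf; by exists i.
    * move=> x; have [A [[i [/in_Sf [j [Hj Ej]] VA]] Ax]] := Hc x.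
      exists A; split=> //; exists j; split=> //; by rewrite Ej.
Qed.
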